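(* Let $k\geqslant 2$ and $m_1,\ldots,m_k\geqslant 2$. Write $S^{m_i}=\{(\mathbf{x}_i,z_i):\mathbf{x}_i\in\mathbb{R}^{m_i-1},\ z_i\in\mathbb{C},\ |\mathbf{x}_i|^2+|z_i|^2=1\}$. Let the torus $T^{k-1}=U(1)^{k-1}$ act on $S^{m_1}\times\cdots\times S^{m_k}$ by \[ (r_1,\ldots,r_{k-1})\cdot((\mathbf{x}_1,z_1),\ldots,(\mathbf{x}_k,z_k))=((\mathbf{x}_1,z_1r_1^{-1}),(\mathbf{x}_2,r_1z_2r_2^{-1}),\ldots,(\mathbf{x}_{k-1},r_{k-2}z_{k-1}r_{k-1}^{-1}),(\mathbf{x}_k,r_{k-1}z_k)). \] Then the orbit space $(S^{m_1}\times\cdots\times S^{m_k})/T^{k-1}$ is homeomorphic to the sphere $S^m$, $m=m_1+\cdots+m_k-(k-1)$, and the canonical projection onto the orbit space is given by \[ ((\mathbf{x}_1,z_1),\ldots,(\mathbf{x}_k,z_k))\mapsto\frac{(\mathbf{x}_1,\ldots,\mathbf{x}_k,z_1z_2\cdots z_k)}{\sqrt{|\mathbf{x}_1|^2+\cdots+|\mathbf{x}_k|^2+|z_1z_2\cdots z_k|^2}}\in S^m\subset\mathbb{R}^{m_1-1}\times\cdots\times\mathbb{R}^{m_k-1}\times\mathbb{C}. \] *)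

(* Defs.v *)
From mathcomp Require Import all_boot all_order all_algebra.
From mathcomp Require Import complex reals.
Set Implicit Arguments. Unset Strict Implicit. Unset Printing Implicit Defensive.
Import Order.TTheory GRing.Theory Num.Theory.
Local Open Scope ring_scope.
Local Open Scope complex_scope.

Section Defs.
Variables (R : realType) (k : nat) (m : 'I_k -> nat).

Definition vnorm2 n (x : 'rV[R]_n) : R := \sum_(j < n) x 0 j ^+ 2.
Definition cnorm2 (z : R[i]) : R := complex.Re z ^+ 2 + complex.Im z ^+ 2.

Definition Pt := ((forall i : 'I_k, 'rV[R]_(m i - 1)) * ('I_k -> R[i]))%type.
Definition Tgt := ((forall i : 'I_k, 'rV[R]_(m i - 1)) * R[i])%type.

Definition InDom (p : Pt) : Prop :=
  forall i : 'I_k, vnorm2 (p.1 i) + cnorm2 (p.2 i) = 1.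
Definition InSm (q : Tgt) : Prop :=
  \sum_(i < k) vnorm2 (q.1 i) + cnorm2 q.2 = 1.

(* squared Euclidean distances *)
Definition distP (p q : Pt) : R :=
  \sum_(i < k) (vnorm2 (p.1 i - q.1 i) + cnorm2 (p.2 i - q.2 i)).
Definition distT (p q : Tgt) : R :=
  \sum_(i < k) vnorm2 (p.1 i - q.1 i) + cnorm2 (p.2 - q.2).

(* torus T^{k-1} = U(1)^{k-1}: r_1, ..., r_{k-1} stored as r : 'I_(k-1) -> C *)
Definition InTorus (r : 'I_k.-1 -> R[i]) : Prop := forall j, cnorm2 (r j) = 1.
(* r_j (1-based), with the convention r_0 = r_k = 1 *)
Definition rext (r : 'I_k.-1 -> R[i]) (j : nat) : R[i] :=
  if (0 < j)%N then (if insub j.-1 is Some o then r o else 1) else 1.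
(* factor i (0-based, i.e. factor i+1 of the paper):  z_{i+1} |-> r_i z_{i+1} r_{i+1}^{-1} *)
Definition act (r : 'I_k.-1 -> R[i]) (p : Pt) : Pt :=
  (p.1, fun i : 'I_k => rext r i * p.2 i * (rext r i.+1)^-1).

Definition proj (p : Pt) : Tgt :=
  let w := \prod_(i < k) p.2 i in
  let s := Num.sqrt (\sum_(i < k) vnorm2 (p.1 i) + cnorm2 w) in
  (fun i => s^-1 *: p.1 i, w * (s^-1)%:C).

End Defs.

Definition rel_open (R : realType) (T : Type) (d : T -> T -> R)
  (S U : T -> Prop) : Prop :=
  forall x, S x -> U x ->
    exists2 e : R, 0 < e & forall y, S y -> d x y < e -> U y.

Definition rel_continuous (R : realType) (T T' : Type) (d : T -> T -> R)
  (d' : T' -> T' -> R) (S : T -> Prop) (f : T -> T') : Prop :=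
  forall x, S x -> forall e : R, 0 < e ->
    exists2 del : R, 0 < del & forall y, S y -> d x y < del -> d' (f x) (f y) < e.

(* Main.v *)
Require Import Defs.
From mathcomp Require Import all_boot all_order all_algebra.
From mathcomp Require Import complex reals.
From mathcomp Require Import ring lra zify.
From Stdlib Require Import FunctionalExtensionality.
Import Order.TTheory GRing.Theory Num.Theory.
Local Open Scope ring_scope.
Local Open Scope complex_scope.
Set Implicit Arguments. Unset Strict Implicit. Unset Printing Implicit Defensive.

Section S.
Variable R : realType.
Implicit Types a b c : R[i].
Lemma cnorm2M a b : cnorm2 (a * b) = cnorm2 a * cnorm2 b.
Proof. case: a => a1 a2; case: b => b1 b2; rewrite /cnorm2 /=. ring. Qed.
Lemma cnorm2_ge0 a : 0 <= cnorm2 a.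
Proof. rewrite /cnorm2; apply: addr_ge0; apply: sqr_ge0. Qed.
Lemma cnorm2_eq0 a : (cnorm2 a == 0) = (a == 0).
Proof. case: a => a1 a2; rewrite /cnorm2 /=. rewrite paddr_eq0 ?sqr_ge0 // !sqrf_eq0.
by rewrite eq_complex /=. Qed.
Lemma cnorm21 : cnorm2 (1 : R[i]) = 1.
Proof. rewrite /cnorm2 /=. by rewrite expr1n expr0n addr0. Qed.
Lemma cnorm2C (x : R) : cnorm2 (x%:C) = x ^+ 2.
Proof. rewrite /cnorm2 /=. by rewrite expr0n addr0. Qed.
Lemma cnorm2_prod (I : Type) (r : seq I) (P : pred I) (F : I -> R[i]) :
  cnorm2 (\prod_(i <- r | P i) F i) = \prod_(i <- r | P i) cnorm2 (F i).
Proof. elim/big_rec2: _ => [|i x y _ H]; first by rewrite cnorm21. by rewrite cnorm2M H. Qed.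
Lemma cnorm2D_le a b : cnorm2 (a + b) <= 2 * cnorm2 a + 2 * cnorm2 b.
Proof. case: a => a1 a2; case: b => b1 b2; rewrite /cnorm2 /=.
have h1 := sqr_ge0 (a1 - b1); have h2 := sqr_ge0 (a2 - b2); nra. Qed.
Lemma cnorm2N a : cnorm2 (- a) = cnorm2 a.
Proof. case: a => a1 a2; rewrite /cnorm2 /=. ring. Qed.
Lemma cnorm2V a : cnorm2 (a^-1) = (cnorm2 a)^-1.
Proof.
have [->|a0] := eqVneq a 0; first by rewrite invr0 /cnorm2 /= expr0n addr0 invr0.
have h : cnorm2 a * cnorm2 a^-1 = 1 by rewrite -cnorm2M divff // cnorm21.
have ha : cnorm2 a != 0 by rewrite cnorm2_eq0.
by rewrite -[LHS]mul1r -(mulVf ha) -mulrA h mulr1.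
Qed.
Lemma cnorm2B a b : cnorm2 (a - b) = cnorm2 a + cnorm2 b - 2 * (complex.Re a * complex.Re b + complex.Im a * complex.Im b).
Proof. case: a => a1 a2; case: b => b1 b2; rewrite /cnorm2 /=. ring. Qed.
Lemma cnorm2MC a (x : R) : cnorm2 (a * x%:C) = x ^+ 2 * cnorm2 a.
Proof. by rewrite cnorm2M cnorm2C mulrC. Qed.
Lemma cdotMC a b (x y : R) : complex.Re (a * x%:C) * complex.Re (b * y%:C) + complex.Im (a * x%:C) * complex.Im (b * y%:C)
  = x * y * (complex.Re a * complex.Re b + complex.Im a * complex.Im b).
Proof. case: a => a1 a2; case: b => b1 b2 /=. ring. Qed.

Definition vdot n (x y : 'rV[R]_n) : R := \sum_(j < n) x 0 j * y 0 j.
Arguments vdot {n}.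
Lemma vnorm2_ge0 n (x : 'rV[R]_n) : 0 <= vnorm2 x.
Proof. by apply: sumr_ge0 => j _; apply: sqr_ge0. Qed.
Lemma vnorm2Z n (c : R) (x : 'rV[R]_n) : vnorm2 (c *: x) = c ^+ 2 * vnorm2 x.
Proof. rewrite /vnorm2 mulr_sumr; apply: eq_bigr => j _; by rewrite mxE exprMn. Qed.
Lemma vnorm2B n (x y : 'rV[R]_n) : vnorm2 (x - y) = vnorm2 x + vnorm2 y - 2 * vdot x y.
Proof.
rewrite /vnorm2 /vdot mulr_sumr -big_split -sumrB /=; apply: eq_bigr => j _; rewrite !mxE; ring.
Qed.
Lemma vdotZ n (a b : R) (x y : 'rV[R]_n) : vdot (a *: x) (b *: y) = a * b * vdot x y.
Proof. rewrite /vdot mulr_sumr; apply: eq_bigr => j _; rewrite !mxE; ring. Qed.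
Lemma vnorm2_tri n (x y z : 'rV[R]_n) : vnorm2 (x - z) <= 2 * vnorm2 (x - y) + 2 * vnorm2 (y - z).
Proof.
rewrite /vnorm2 !mulr_sumr -big_split; apply: ler_sum => j _; rewrite !mxE /=.
have h := sqr_ge0 (x 0 j - 2 * y 0 j + z 0 j); nra.
Qed.
Lemma vnorm2_sym n (x y : 'rV[R]_n) : vnorm2 (x - y) = vnorm2 (y - x).
Proof. rewrite /vnorm2; apply: eq_bigr => j _; rewrite !mxE; ring. Qed.
Lemma vnorm2_eq0 n (x : 'rV[R]_n) : vnorm2 x = 0 -> x = 0.
Proof.
move=> /psumr_eq0P h; apply/matrixP => i j; rewrite (ord1 i) mxE.
by apply/eqP; rewrite -sqrf_eq0; apply/eqP; apply: h => // l _; apply: sqr_ge0.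
Qed.
Lemma cnorm2_sym a b : cnorm2 (a - b) = cnorm2 (b - a).
Proof. by rewrite -opprB cnorm2N. Qed.
Lemma cnorm2_tri a b c : cnorm2 (a - c) <= 2 * cnorm2 (a - b) + 2 * cnorm2 (b - c).
Proof. by have := cnorm2D_le (a - b) (b - c); rewrite addrA subrK. Qed.

Lemma cnorm2_prodB (I : Type) (r : seq I) (F G : I -> R[i]) :
  (forall i, cnorm2 (F i) <= 1) -> (forall i, cnorm2 (G i) <= 1) ->
  cnorm2 (\prod_(i <- r) F i - \prod_(i <- r) G i) <=
    2 ^+ size r * \sum_(i <- r) cnorm2 (F i - G i).
Proof.
move=> hF hG; elim: r => [|x r IH].
  by rewrite !big_nil subrr /cnorm2 /= expr0n addr0 mulr0.
rewrite !big_cons /=.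
set A := \prod_(i <- r) F i; set B := \prod_(i <- r) G i.
set S := \sum_(i <- r) _ in IH *.
have -> : F x * A - G x * B = (F x - G x) * A + G x * (A - B) by ring.
have hA : cnorm2 A <= 1.
  rewrite /A cnorm2_prod; apply: prodr_ile1 => i _; rewrite cnorm2_ge0; exact: hF.
have hGx := hG x.
have hu := cnorm2_ge0 (F x - G x).
have hAB := cnorm2_ge0 (A - B).
have hA0 := cnorm2_ge0 A.
have hG0 := cnorm2_ge0 (G x).
have hP : 1 <= 2 ^+ size r :> R by apply: exprn_ege1; rewrite ler1n.
have hS : 0 <= S by apply: sumr_ge0 => i _; apply: cnorm2_ge0.
apply: (le_trans (cnorm2D_le _ _)); rewrite !cnorm2M exprS.
set u := cnorm2 (F x - G x) in hu *; set P := 2 ^+ size r in hP IH *.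
nra.
Qed.

Lemma prod1B_ge (I : Type) (r : seq I) (a : I -> R) :
  (forall i, 0 <= a i <= 1) -> 1 - \sum_(i <- r) a i <= \prod_(i <- r) (1 - a i).
Proof.
move=> ha; elim: r => [|x r IH]; first by rewrite !big_nil subr0.
rewrite !big_cons; have /andP[h0 h1] := ha x.
have hS : 0 <= \sum_(i <- r) a i by apply: sumr_ge0 => i _; case/andP: (ha i).
set S := \sum_(i <- r) a i in IH hS *; set P := \prod_(i <- r) _ in IH *.
nra.
Qed.
End S.
Arguments vdot {R n}.

Section T.
Variables (R : realType) (k : nat) (m : 'I_k -> nat).
Definition Nt (q : Tgt R m) : R := \sum_(i < k) vnorm2 (q.1 i) + cnorm2 q.2.
Definition dotT (q q' : Tgt R m) : R := \sum_(i < k) vdot (q.1 i) (q'.1 i) +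
  (complex.Re q.2 * complex.Re q'.2 + complex.Im q.2 * complex.Im q'.2).
Definition sc (a : R) (q : Tgt R m) : Tgt R m := (fun i => a *: q.1 i, q.2 * a%:C).
Definition vp (p : Pt R m) : Tgt R m := (p.1, \prod_(i < k) p.2 i).
Lemma proj_sc p : proj p = sc (Num.sqrt (Nt (vp p)))^-1 (vp p).
Proof. by []. Qed.
Lemma distTE q q' : distT q q' = Nt q + Nt q' - 2 * dotT q q'.
Proof.
rewrite /distT /Nt /dotT cnorm2B.
rewrite (eq_bigr (fun i => (vnorm2 (q.1 i) + vnorm2 (q'.1 i)) - 2 * vdot (q.1 i) (q'.1 i))); last first.
  by move=> i _; rewrite vnorm2B.
rewrite sumrB big_split -mulr_sumr /=; ring.
Qed.
Lemma NtZ a q : Nt (sc a q) = a ^+ 2 * Nt q.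
Proof.
rewrite /Nt /sc /= cnorm2MC [RHS]mulrDr mulr_sumr; congr (_ + _).
by apply: eq_bigr => i _; rewrite vnorm2Z.
Qed.
Lemma dotTZ a b q q' : dotT (sc a q) (sc b q') = a * b * dotT q q'.
Proof.
rewrite /dotT /sc /= cdotMC [RHS]mulrDr mulr_sumr; congr (_ + _).
by apply: eq_bigr => i _; rewrite vdotZ.
Qed.
Lemma Nt_ge0 q : 0 <= Nt q.
Proof. apply: addr_ge0; last exact: cnorm2_ge0. by apply: sumr_ge0 => i _; apply: vnorm2_ge0. Qed.
Lemma distT_ge0 (q q' : Tgt R m) : 0 <= distT q q'.
Proof. apply: addr_ge0; last exact: cnorm2_ge0. by apply: sumr_ge0 => i _; apply: vnorm2_ge0. Qed.
Lemma distP_ge0 (p p' : Pt R m) : 0 <= distP p p'.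
Proof. apply: sumr_ge0 => i _; apply: addr_ge0; [exact: vnorm2_ge0|exact: cnorm2_ge0]. Qed.
Lemma distP_sym (p p' : Pt R m) : distP p p' = distP p' p.
Proof. apply: eq_bigr => i _; by rewrite vnorm2_sym cnorm2_sym. Qed.
Lemma distT_sym (q q' : Tgt R m) : distT q q' = distT q' q.
Proof. rewrite /distT cnorm2_sym; congr (_ + _); apply: eq_bigr => i _; by rewrite vnorm2_sym. Qed.
Lemma distT_tri (a b c : Tgt R m) : distT a c <= 2 * distT a b + 2 * distT b c.
Proof.
rewrite /distT.
have h2 : \sum_(i < k) vnorm2 (a.1 i - c.1 i) <= 2 * \sum_(i < k) vnorm2 (a.1 i - b.1 i)
   + 2 * \sum_(i < k) vnorm2 (b.1 i - c.1 i).
  rewrite !mulr_sumr -big_split; apply: ler_sum => i _; exact: vnorm2_tri.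
have h1 := cnorm2_tri a.2 b.2 c.2; lra.
Qed.

Lemma InDom_bounds (p : Pt R m) : InDom p -> forall i,
  cnorm2 (p.2 i) = 1 - vnorm2 (p.1 i) /\ 0 <= vnorm2 (p.1 i) <= 1.
Proof.
move=> h i; have := h i; have := cnorm2_ge0 (p.2 i); have := vnorm2_ge0 (p.1 i).
move=> h1 h2 h3; split; first by rewrite -h3 addrC addKr.
by apply/andP; split; lra.
Qed.

Lemma Nt_vp (p : Pt R m) : InDom p ->
  Nt (vp p) = \sum_(i < k) vnorm2 (p.1 i) + \prod_(i < k) (1 - vnorm2 (p.1 i)).
Proof.
move=> h; rewrite /Nt /vp /= cnorm2_prod; congr (_ + _).
by apply: eq_bigr => i _; case: (InDom_bounds h i).
Qed.

Lemma Nt_vp_ge1 (p : Pt R m) : InDom p -> 1 <= Nt (vp p).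
Proof.
move=> h; rewrite Nt_vp //.
have := @prod1B_ge R _ (index_enum 'I_k) (fun i => vnorm2 (p.1 i)) (fun i => (InDom_bounds h i).2).
lra.
Qed.

Lemma size_index_enum_ord : size (index_enum 'I_k) = k.
Proof. by rewrite -(filter_predT (index_enum _)) deprecated_filter_index_enum -cardE card_ord. Qed.

Lemma distT_vp (p p' : Pt R m) : InDom p -> InDom p' -> distT (vp p) (vp p') <= 2 ^+ k * distP p p'.
Proof.
move=> h h'; rewrite /distT /vp /=.
have hb (q : Pt R m) : InDom q -> forall i, cnorm2 (q.2 i) <= 1.
  move=> hq i; case: (InDom_bounds hq i) => -> /andP[? ?]; lra.
have := cnorm2_prodB (index_enum 'I_k) (hb _ h) (hb _ h').
rewrite size_index_enum_ord => H.
rewrite /distP big_split /= mulrDr; apply: lerD; last exact: H.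
have hk : 1 <= 2 ^+ k :> R by apply: exprn_ege1; rewrite ler1n.
have hV : 0 <= \sum_(i < k) vnorm2 (p.1 i - p'.1 i) by apply: sumr_ge0 => i _; exact: vnorm2_ge0.
nra.
Qed.

Lemma key_ineq (s s' d : R) : 1 <= s -> 1 <= s' -> 0 <= s ^+ 2 + s' ^+ 2 - 2 * d ->
  s^-1 ^+ 2 * s ^+ 2 + s'^-1 ^+ 2 * s' ^+ 2 - 2 * (s^-1 * s'^-1) * d <= s ^+ 2 + s' ^+ 2 - 2 * d.
Proof.
move=> hs hs' hX.
have s0 : s != 0 by apply/eqP => e; rewrite e in hs; lra.
have s0' : s' != 0 by apply/eqP => e; rewrite e in hs'; lra.
have tp : 0 < s * s' by apply: mulr_gt0; lra.
rewrite -!exprMn !mulVf // !expr1n -invfM.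
rewrite -(ler_pM2l tp).
have -> : s * s' * (1 + 1 - 2 * (s * s')^-1 * d) = 2 * (s * s') - 2 * d.
  by field; rewrite s0 s0'.
have h1 := sqr_ge0 (s - s').
have h2 : 0 <= (s * s' - 1) * (s ^+ 2 + s' ^+ 2 - 2 * d) by apply: mulr_ge0 => //; nra.
nra.
Qed.

Lemma key_ineq2 (N N' d : R) : 1 <= N -> 1 <= N' -> 0 <= N + N' - 2 * d ->
  (Num.sqrt N)^-1 ^+ 2 * N + (Num.sqrt N')^-1 ^+ 2 * N' -
  2 * ((Num.sqrt N)^-1 * (Num.sqrt N')^-1 * d) <= N + N' - 2 * d.
Proof.
move=> g g' hX; rewrite [2 * (_ * _ * d)]mulrA.
have s1 : 1 <= Num.sqrt N by rewrite -sqrtr1 ler_sqrt //; lra.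
have s1' : 1 <= Num.sqrt N' by rewrite -sqrtr1 ler_sqrt //; lra.
have := key_ineq (d:=d) s1 s1'; rewrite !sqr_sqrtr; try lra.
Qed.

Lemma proj_lip (p p' : Pt R m) : InDom p -> InDom p' ->
  distT (proj p) (proj p') <= 2 ^+ k * distP p p'.
Proof.
move=> h h'; apply: le_trans (distT_vp h h'); rewrite !proj_sc distTE !NtZ dotTZ.
have := distTE (vp p) (vp p'); have := distT_ge0 (vp p) (vp p').
move=> H0 H1; rewrite H1 in H0 *.
exact: key_ineq2 (Nt_vp_ge1 h) (Nt_vp_ge1 h') H0.
Qed.
End T.

Section P.
Variables (R : realType) (k : nat) (m : 'I_k -> nat).

Lemma part1 (p : Pt R m) : InDom p -> InSm (proj p).
Proof.
move=> h; rewrite /InSm -/(Nt (proj p)) proj_sc NtZ.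
have g := Nt_vp_ge1 h.
rewrite exprVn sqr_sqrtr; last lra.
by rewrite mulVf //; apply/eqP => e; rewrite e in g; lra.
Qed.

Lemma cnorm2_neq0 (a : R[i]) : cnorm2 a = 1 -> a != 0.
Proof. move=> h; rewrite -cnorm2_eq0 h; exact: oner_neq0. Qed.

Lemma rext_neq0 (r : 'I_k.-1 -> R[i]) j : InTorus r -> rext r j != 0.
Proof.
move=> hr; rewrite /rext; case: ifP => _; last exact: oner_neq0.
case: insub => [o|]; [exact: cnorm2_neq0 (hr o)|exact: oner_neq0].
Qed.

Lemma tele (a : nat -> R[i]) n : (forall j, a j != 0) ->
  \prod_(i < n) (a i * (a i.+1)^-1) = a 0%N * (a n)^-1.
Proof.
move=> ha; elim: n => [|n IH]; first by rewrite big_ord0 mulfV.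
rewrite big_ord_recr /= IH; field; rewrite ha; exact: ha.
Qed.

Lemma rext0 (r : 'I_k.-1 -> R[i]) : rext r 0 = 1.
Proof. by []. Qed.
Lemma rextk (r : 'I_k.-1 -> R[i]) : (0 < k)%N -> rext r k = 1.
Proof. by move=> hk; rewrite /rext hk insubN // ltnn. Qed.

Lemma vp_act (r : 'I_k.-1 -> R[i]) (p : Pt R m) : (0 < k)%N -> InTorus r -> vp (act r p) = vp p.
Proof.
move=> hk hr; rewrite /vp /act /=; congr (_, _).
rewrite (eq_bigr (fun i : 'I_k => p.2 i * (rext r i * (rext r i.+1)^-1))); last first.
  by move=> i _; rewrite mulrAC mulrC mulrA.
rewrite big_split /= tele; last by move=> j; exact: rext_neq0.
by rewrite rext0 rextk // invr1 !mulr1.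
Qed.

Lemma c_ge1 (I : eqType) (r : seq I) (a : I -> R) (c : R) : 0 < c ->
  (forall i, 0 <= a i <= 1) -> (forall i, c ^+ 2 * a i <= 1) ->
  \prod_(i <- r) (1 - c ^+ 2 * a i) = c ^+ 2 * \prod_(i <- r) (1 - a i) -> 1 <= c.
Proof.
move=> c0 ha hc E; rewrite leNgt; apply/negP => c1.
have c2 : c ^+ 2 < 1 by nra.
have hP : \prod_(i <- r) (1 - a i) <= \prod_(i <- r) (1 - c ^+ 2 * a i).
  apply: ler_prod => i _; have /andP[? ?] := ha i; apply/andP; split; nra.
have P0 : 0 <= \prod_(i <- r) (1 - a i).
  apply: prodr_ge0 => i _; have /andP[? ?] := ha i; lra.
have [Pp|Pz] := ltrP 0 (\prod_(i <- r) (1 - a i)); first nra.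
have Pe : \prod_(i <- r) (1 - a i) = 0 by apply/le_anti/andP.
have : \prod_(i <- r) (1 - c ^+ 2 * a i) == 0 by rewrite E Pe mulr0.
rewrite prodf_seq_eq0; case/hasP => i _ /= /eqP e.
have /andP[? ?] := ha i; nra.
Qed.

Definition sN (p : Pt R m) := Num.sqrt (Nt (vp p)).

Lemma sN_ge1 (p : Pt R m) : InDom p -> 1 <= sN p.
Proof. move=> h; have := Nt_vp_ge1 h => g; rewrite /sN -sqrtr1 ler_sqrt //; lra. Qed.

Lemma proj_eq_scale (p p' : Pt R m) : InDom p -> InDom p' -> proj p = proj p' ->
  (forall i, p.1 i = (sN p / sN p') *: p'.1 i) /\
  \prod_(i < k) p.2 i = \prod_(i < k) p'.2 i * (sN p / sN p')%:C.
Proof.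
move=> h h' E.
have s0 : sN p != 0 by have := sN_ge1 h; apply: contraTneq => ->; rewrite ler10.
have s0' : sN p' != 0 by have := sN_ge1 h'; apply: contraTneq => ->; rewrite ler10.
rewrite !proj_sc /sc -/(sN p) -/(sN p') in E; case: E => E1 E2; split.
  move=> i; have := f_equal (fun f => f i) E1 => /= /(f_equal (fun v => sN p *: v)).
  by rewrite !scalerA mulfV // scale1r mulrC => ->.
have := f_equal (fun w => w * (sN p)%:C) E2.
rewrite -!mulrA -!rmorphM /= mulVf // mulr1 => ->; by rewrite [_^-1 * _]mulrC.
Qed.

Lemma cnorm2_prod_dom (p : Pt R m) : InDom p ->
  cnorm2 (\prod_(i < k) p.2 i) = \prod_(i < k) (1 - vnorm2 (p.1 i)).
Proof.
move=> h; rewrite cnorm2_prod; by apply: eq_bigr => i _; case: (InDom_bounds h i).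
Qed.

Lemma sN_half (p p' : Pt R m) : InDom p -> InDom p' -> proj p = proj p' -> sN p' <= sN p.
Proof.
move=> h h' E; have [E1 E2] := proj_eq_scale h h' E.
have g := sN_ge1 h; have g' := sN_ge1 h'.
set c := sN p / sN p' in E1 E2.
have c0 : 0 < c by apply: divr_gt0; lra.
have hv i : c ^+ 2 * vnorm2 (p'.1 i) = vnorm2 (p.1 i) by rewrite E1 vnorm2Z.
suff : 1 <= c by rewrite /c ler_pdivlMr ?mul1r //; lra.
apply: (@c_ge1 _ (index_enum 'I_k) (fun i => vnorm2 (p'.1 i))) => //.
- by move=> i; case: (InDom_bounds h' i).
- by move=> i; rewrite hv; case: (InDom_bounds h i) => _ /andP[].
- rewrite (eq_bigr (fun i => 1 - vnorm2 (p.1 i))); last by move=> i _; rewrite hv.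
  have := cnorm2_prod_dom h; rewrite E2 cnorm2MC cnorm2_prod_dom // => <-.
Qed.

Lemma proj_eq_same (p p' : Pt R m) : InDom p -> InDom p' -> proj p = proj p' ->
  (forall i, p.1 i = p'.1 i) /\ \prod_(i < k) p.2 i = \prod_(i < k) p'.2 i.
Proof.
move=> h h' E.
have e : sN p = sN p' by apply/le_anti/andP; split; apply: sN_half.
have [E1 E2] := proj_eq_scale h h' E.
have s0 : sN p' != 0 by have := sN_ge1 h'; apply: contraTneq => ->; rewrite ler10.
rewrite e mulfV // in E1 E2; split; first by move=> i; rewrite E1 scale1r.
by rewrite E2 mulr1.
Qed.
End P.

Section O.
Variables (R : realType) (k : nat).

Lemma orbit_exists (z z' : 'I_k -> R[i]) : (0 < k)%N ->
  (forall i, cnorm2 (z i) = cnorm2 (z' i)) -> \prod_(i < k) z i = \prod_(i < k) z' i ->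
  exists2 r : 'I_k.-1 -> R[i], InTorus r &
    z' = (fun i : 'I_k => rext r i * z i * (rext r i.+1)^-1).
Proof.
move=> hk hz hp.
pose u i := if z i == 0 then 1 else z' i / z i.
have hu i : cnorm2 (u i) = 1.
  rewrite /u; case: eqP => [_|/eqP nz]; first exact: cnorm21.
  by rewrite cnorm2M cnorm2V -hz mulfV // cnorm2_eq0.
pose P := \prod_(i < k) u i.
have hP : P != 0 by apply: cnorm2_neq0; rewrite cnorm2_prod big1 // => i _; exact: hu.
pose u' i := if [pick j | z j == 0] is Some j then (if i == j then u i / P else u i) else u i.
have hu' i : cnorm2 (u' i) = 1.
  rewrite /u'; case: pickP => [j _|_]; last exact: hu.
  case: eqP => _; last exact: hu.
  rewrite cnorm2M cnorm2V hu cnorm2_prod big1 ?invr1 ?mulr1 // => l _; exact: hu.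
have hz' i : z' i = u' i * z i.
  have [e|nz] := eqVneq (z i) 0.
    by rewrite e mulr0; apply/eqP; rewrite -cnorm2_eq0 -hz e cnorm2_eq0.
  rewrite /u'; case: pickP => [j /eqP zj|_].
    have -> : (i == j) = false by apply/eqP => eij; rewrite eij zj eqxx in nz.
    by rewrite /u (negbTE nz) divfK.
  by rewrite /u (negbTE nz) divfK.
have hpu : \prod_(i < k) u' i = 1.
  rewrite /u'; case: pickP => [j /eqP zj|nz].
    rewrite (bigD1 j) //= eqxx.
    rewrite (eq_bigr (fun i => u i)); last by move=> i /negbTE ->.
    have eP : P = u j * \prod_(i < k | i != j) u i by rewrite /P (bigD1 j).
    by rewrite mulrAC -eP mulfV.
  rewrite (eq_bigr (fun i => z' i / z i)); last by move=> i _; rewrite /u nz.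
  rewrite prodf_div -hp mulfV //; apply/prodf_neq0 => i _; by rewrite nz.
pose v i := (u' i)^-1.
have hv0 i : v i != 0 by rewrite invr_eq0; apply: cnorm2_neq0.
pose r (o : 'I_k.-1) := \prod_(l < k | (l <= o)%N) v l.
have rE j : (j <= k)%N -> rext r j = \prod_(l < k | (l < j)%N) v l.
  move=> hj; rewrite /rext; case: (posnP j) => [->|jp] /=.
    by rewrite big1 // => l; rewrite ltn0.
  case: insubP => [o ho eo|hno].
    rewrite /r; apply: eq_bigl => l; rewrite eo; lia.
  have ejk : j = k by move: hno hj jp; lia.
  rewrite ejk (eq_bigl xpredT) ?prodfV ?hpu ?invr1 // => l; exact: ltn_ord.
have hr : InTorus r.
  by move=> o; rewrite /r cnorm2_prod big1 // => l _; rewrite /v cnorm2V hu' invr1.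
exists r => //; apply: functional_extensionality => i.
rewrite !rE ?(ltn_ord i) ?(ltnW (ltn_ord i)) //.
rewrite [X in _ / X](bigD1 i) /=; last exact: ltnSn.
rewrite [X in v i * X](eq_bigl (fun l : 'I_k => (l < i)%N)); last first.
  move=> l /=; rewrite -val_eqE /=; lia.
have hQ : \prod_(l < k | (l < i)%N) v l != 0 by apply/prodf_neq0 => l _.
rewrite hz' /v; field; rewrite hQ /=.
by rewrite (cnorm2_neq0 (hu' i)).
Qed.
End O.

Section U.
Variable R : realType.

Lemma exmax (I : finType) (i0 : I) (f : I -> R) : exists j, forall i, f i <= f j.
Proof.
have := @Order.TotalTheory.arg_maxP _ _ I i0 xpredT f isT.
case=> j _ H; exists j => i; exact: H.
Qed.

Lemma exists_u (I : finType) (i0 : I) (b : I -> R) (W : R) :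
  (forall i, 0 <= b i) -> 0 <= W -> \sum_i b i + W = 1 ->
  exists u, [/\ 0 < u, forall i, u * b i <= 1 & \prod_i (1 - u * b i) = u * W].
Proof.
move=> hb hW hs; have [j hj] := exmax i0 b.
have [bj0|bjp] := lerP (b j) 0.
  have b0 i : b i = 0 by apply/le_anti/andP; split; [exact: le_trans (hj i) bj0|exact: hb].
  exists 1; split => //; first by move=> i; rewrite b0 mulr0 ler01.
  rewrite big1 => [|i _]; last by rewrite b0 mulr0 subr0.
  by move: hs; rewrite big1 // add0r mul1r.
pose p : {poly R} := W%:P * 'X - \prod_i (1 - (b i)%:P * 'X).
have pE x : p.[x] = W * x - \prod_i (1 - b i * x).
  by rewrite /p hornerD hornerN horner_prod hornerMX hornerC; congr (_ - _);
     apply: eq_bigr => i _; rewrite hornerD hornerN hornerC hornerMX hornerC.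
have U0 : 0 <= (b j)^-1 by rewrite invr_ge0 ltW.
have H : p.[0] <= 0 <= p.[(b j)^-1].
  rewrite !pE mulr0 add0r big1 => [|i _]; last by rewrite mulr0 subr0.
  rewrite lerN10 /= subr_ge0 (bigD1 j) //= mulfV ?subrr ?mul0r ?gt_eqF //.
  by apply: mulr_ge0.
have [x /andP[x0 xU] rx] := @poly_ivt R p 0 (b j)^-1 U0 H.
have xp : 0 < x.
  rewrite lt_neqAle x0 andbT; apply/eqP => e; move: rx; rewrite /root pE -e mulr0 add0r.
  rewrite big1 => [|i _]; last by rewrite mulr0 subr0.
  by rewrite oppr_eq0 oner_eq0.
exists x; split => //.
  move=> i; apply: le_trans (_ : (b j)^-1 * b j <= 1).
    by apply: ler_pM => //.
  by rewrite mulVf ?gt_eqF.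
move: rx; rewrite /root pE subr_eq0 => /eqP e.
rewrite (eq_bigr (fun i => 1 - b i * x)) => [|i _]; [by rewrite -e mulrC|by rewrite mulrC].
Qed.
End U.

Section Surj.
Variables (R : realType) (k : nat) (m : 'I_k -> nat).

Lemma proj_surj (q : Tgt R m) : (0 < k)%N -> InSm q -> exists2 p : Pt R m, InDom p & proj p = q.
Proof.
move=> hk hq.
pose o0 : 'I_k := Ordinal hk.
pose b i := vnorm2 (q.1 i); pose W := cnorm2 q.2.
have hb i : 0 <= b i by apply: vnorm2_ge0.
have hW : 0 <= W by apply: cnorm2_ge0.
have [u [u0 ub up]] := exists_u o0 hb hW hq.
pose t := Num.sqrt u.
have t0 : 0 < t by rewrite sqrtr_gt0.
have tu : t ^+ 2 = u by rewrite sqr_sqrtr // ltW.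
pose c i := 1 - u * b i.
have c0 i : 0 <= c i by rewrite subr_ge0.
pose rho i := Num.sqrt (c i).
have rc i : rho i ^+ 2 = c i by rewrite sqr_sqrtr.
pose P' := \prod_(i < k | i != o0) rho i.
have P'2 : P' ^+ 2 = \prod_(i < k | i != o0) c i.
  by rewrite /P' -prodrXl; apply: eq_bigr => i _; rewrite rc.
have cP : c o0 * \prod_(i < k | i != o0) c i = u * W.
  by rewrite -up [RHS](bigD1 o0).
pose z i := if i == o0 then (if q.2 == 0 then (rho o0)%:C else q.2 * t%:C / P'%:C)
            else (rho i)%:C.
pose p : Pt R m := (fun i => t *: q.1 i, z).
have hz i : cnorm2 (z i) = c i.
  rewrite /z; case: eqP => [->|_]; last by rewrite cnorm2C rc.
  case: eqP => [_|/eqP q0]; first by rewrite cnorm2C rc.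
  have W0 : 0 < W by rewrite lt_neqAle hW andbT eq_sym cnorm2_eq0.
  have Pn : \prod_(i < k | i != o0) c i != 0.
    apply/eqP => e; move: cP; rewrite e mulr0 => /esym/eqP; rewrite mulf_eq0.
    by rewrite !gt_eqF.
  rewrite cnorm2M cnorm2V cnorm2MC !cnorm2C P'2 tu -/W.
  by apply: (mulIf Pn); rewrite divfK // cP.
have hp : InDom p.
  move=> i; rewrite /p /= hz vnorm2Z tu /c -/(b i); ring.
have hprod : \prod_(i < k) z i = q.2 * t%:C.
  rewrite (bigD1 o0) //= (eq_bigr (fun i => (rho i)%:C)); last first.
    by move=> i /negbTE hi; rewrite /z hi.
  rewrite -rmorph_prod -/P' /z eqxx.
  case: eqP => [q0|/eqP q0].
    rewrite q0 mul0r -rmorphM /=.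
    have : (rho o0 * P') ^+ 2 = 0.
      by rewrite exprMn rc P'2 cP /W q0 /cnorm2 /= expr0n addr0 mulr0.
    by move/eqP; rewrite expf_eq0 /= => /eqP ->; rewrite rmorph0.
  have W0 : W != 0 by rewrite cnorm2_eq0.
  have Pn : P' != 0.
    apply/eqP => e; move: cP; rewrite -P'2 e expr0n mulr0 => /esym/eqP.
    by rewrite mulf_eq0 (negbTE W0) gt_eqF.
  by rewrite divfK // eq_complex /= (negbTE Pn).
exists p => //.
have NtE : Nt (vp p) = u.
  rewrite /Nt /vp /= hprod cnorm2MC.
  rewrite (eq_bigr (fun i => u * b i)); last by move=> i _; rewrite vnorm2Z tu.
  by rewrite -mulr_sumr -/W tu -mulrDr hq mulr1.
rewrite proj_sc NtE -/t /sc /vp /= hprod.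
rewrite [RHS]surjective_pairing.
congr (_, _).
  apply: functional_extensionality_dep => i; by rewrite scalerA mulVf ?gt_eqF // scale1r.
by rewrite -mulrA -rmorphM /= mulfV ?gt_eqF // mulr1.
Qed.
End Surj.

Section Part3.
Variables (R : realType) (k : nat) (m : 'I_k -> nat).
Lemma part3 (p p' : Pt R m) : (0 < k)%N -> InDom p -> InDom p' ->
  (proj p = proj p' <-> exists2 r, InTorus r & p' = act r p).
Proof.
move=> hk h h'; split.
  move=> E; have [E1 E2] := proj_eq_same h h' E.
  have hz i : cnorm2 (p.2 i) = cnorm2 (p'.2 i).
    by case: (InDom_bounds h i) => ->; case: (InDom_bounds h' i) => -> _; rewrite E1.
  have [r hr er] := orbit_exists hk hz E2.
  exists r => //; rewrite /act -er {1}[p']surjective_pairing; congr (_, _).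
  apply: functional_extensionality_dep => i; by rewrite E1.
by case=> r hr ->; rewrite !proj_sc vp_act.
Qed.
End Part3.

From mathcomp Require Import all_classical all_reals all_analysis.
Require Import Defs.
Import Order.TTheory GRing.Theory Num.Theory.
Import numFieldNormedType.Exports.
Import ArrowAsProduct.
Local Open Scope classical_set_scope.
Local Open Scope ring_scope.
Section C.
Variables (R : realType) (k : nat) (m : 'I_k -> nat).
Definition J := ({i : 'I_k & 'I_(m i - 1)} + ('I_k * bool))%type.
Definition psi (f : J -> R) : Pt R m :=
  (fun i => \row_(j < m i - 1) f (inl (Tagged (fun i => 'I_(m i - 1)) j)),
   fun i => f (inr (i, true)) +i* f (inr (i, false))).
Definition phi (p : Pt R m) : J -> R := fun j =>
  match j with inl s => p.1 (tag s) 0 (tagged s)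
  | inr (i, b) => if b then complex.Re (p.2 i) else complex.Im (p.2 i) end.
Lemma psi_phi p : psi (phi p) = p.
Proof.
rewrite [RHS]surjective_pairing /psi; congr (_, _).
  apply: functional_extensionality_dep => i; apply/matrixP => a j.
  by rewrite (ord1 a) mxE.
apply: functional_extensionality_dep => i /=; by case: (p.2 i).
Qed.

Definition G (i : 'I_k) (f : J -> R) : R :=
  \sum_(j < m i - 1) (f (inl (Tagged (fun i => 'I_(m i - 1)) j)) * f (inl (Tagged (fun i => 'I_(m i - 1)) j)))
  + (f (inr (i, true)) * f (inr (i, true)) + f (inr (i, false)) * f (inr (i, false))).
Lemma GE i f : G i f = vnorm2 ((psi f).1 i) + cnorm2 ((psi f).2 i).
Proof. rewrite /G /vnorm2 /cnorm2 /= !expr2; congr (_ + _); apply: eq_bigr => j _; by rewrite mxE expr2. Qed.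

Lemma coord_cont (j : J) : continuous (fun f : J -> R => f j).
Proof. exact: (@proj_continuous J (fun=> R) j). Qed.

Lemma sq_cont (j : J) : continuous (fun f : J -> R => f j * f j).
Proof. move=> f; apply: continuousM; exact: coord_cont. Qed.

Lemma G_cont i : continuous (G i).
Proof.
have h1 : continuous (fun g : J -> R => \sum_(j < m i - 1)
   (g (inl (Tagged (fun i => 'I_(m i - 1)) j)) * g (inl (Tagged (fun i => 'I_(m i - 1)) j)))).
  apply: (@continuous_big _ _ +%R 0 xpredT add_continuous) => j _; exact: sq_cont.
have h2 : continuous (fun g : J -> R => g (inr (i, true)) * g (inr (i, true)) +
   g (inr (i, false)) * g (inr (i, false))).
  move=> f; apply: (@continuousD R R^o (J -> R) (fun g : J -> R => g (inr (i, true)) * g (inr (i, true)))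
    (fun g : J -> R => g (inr (i, false)) * g (inr (i, false))) f); exact: sq_cont.
move=> f; by apply: (@continuousD R R^o (J -> R) _ _ f); [exact: h1|exact: h2].
Qed.
Definition Kset : set (J -> R) := [set f | InDom (psi f)].

Lemma Kset_closed : closed Kset.
Proof.
have -> : Kset = \bigcap_(i in setT) (G i @^-1` [set 1]).
  apply/seteqP; split => f /=.
    by move=> hf i _; rewrite /= GE; exact: hf.
  by move=> hf i; rewrite -GE; exact: hf.
apply: closed_bigI => i _; apply: preimage_closed; last exact: closed_eq.
by move=> f _; exact: G_cont.
Qed.

Lemma Kset_sub : Kset `<=` [set f : J -> R | forall j, `[-1, 1]%classic (f j)].
Proof.
move=> f hf j; rewrite /= in_itv /=.
suff : f j * f j <= 1 by move=> h; apply/andP; split; nra.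
case: j => [[i j]|[i b]].
  have := hf i; rewrite -GE /G => <-.
  have h0 : 0 <= f (inr (i, true)) * f (inr (i, true)) + f (inr (i, false)) * f (inr (i, false)).
    by apply: addr_ge0; apply: mulr_ge0_le0 || nra.
  rewrite (bigD1 j) //= -addrA lerDl; apply: addr_ge0 => //.
  by apply: sumr_ge0 => l _; nra.
have := hf i; rewrite -GE /G => <-.
have hS : 0 <= \sum_(j < m i - 1) (f (inl (Tagged (fun i => 'I_(m i - 1)) j)) * f (inl (Tagged (fun i => 'I_(m i - 1)) j))).
  by apply: sumr_ge0 => l _; nra.
case: b; nra.
Qed.

Lemma Kset_compact : compact Kset.
Proof.
apply: (subclosed_compact Kset_closed _ Kset_sub).
have := @tychonoff J (fun=> R) (fun=> `[-1, 1]%classic) (fun _ => @segment_compact R (-1) 1). exact.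
Qed.
Definition Mc : R := \sum_(i < k) ((m i - 1)%:R + 2).
Lemma Mc_ge0 : 0 <= Mc.
Proof. by apply: sumr_ge0 => i _; apply: addr_ge0. Qed.

Lemma sq_lt (x d : R) : `|x| < d -> x ^+ 2 <= d ^+ 2.
Proof. rewrite ltr_norml => /andP[h1 h2]; nra. Qed.

Lemma distP_psi (f g : J -> R) d : (forall j, `|f j - g j| < d) ->
  distP (psi f) (psi g) <= Mc * d ^+ 2.
Proof.
move=> h; rewrite /distP /Mc mulr_suml; apply: ler_sum => i _.
rewrite mulrDl; apply: lerD.
  apply: le_trans (_ : \sum_(j < m i - 1) d ^+ 2 <= _).
    by apply: ler_sum => j _; rewrite !mxE; apply: sq_lt; exact: h.
  by rewrite sumr_const card_ord mulr_natl.
rewrite /cnorm2 /=.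
have := sq_lt (h (inr (i, true))); have := sq_lt (h (inr (i, false))); lra.
Qed.

Lemma cluster_seq (pn : nat -> Pt R m) : (forall n, InDom (pn n)) ->
  exists2 ps, InDom ps &
    forall d, 0 < d -> forall N, exists2 n, (N <= n)%N & distP ps (pn n) < d.
Proof.
move=> hp.
have FK : ((fun n => phi (pn n)) @ \oo) Kset.
  by exists 0%N => // n _; rewrite /Kset /= psi_phi.
have [f [Kf cf]] := Kset_compact _ FK.
exists (psi f) => // d d0 N.
have M1 : 0 < Mc + 1 by have := Mc_ge0; lra.
pose del := Num.sqrt (d / (Mc + 1)).
have del0 : 0 < del by rewrite sqrtr_gt0 divr_gt0.
have hB : nbhs f [set g : J -> R | forall j, `|f j - g j| < del].
  have := @filter_forall _ J (fun j (g : J -> R) => `|f j - g j| < del) (nbhs f) _.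
  apply => j.
  have := @coord_cont j f _ (nbhsx_ballx (f j) del del0).
  exact.
have hA : ((fun n => phi (pn n)) @ \oo) [set g | exists2 n, (N <= n)%N & g = phi (pn n)].
  by exists N => // n /= hn; exists n.
have [g [[n hn ->] hg]] := cf _ _ hA hB.
exists n => //; rewrite -[pn n]psi_phi.
apply: le_lt_trans (distP_psi hg) _.
rewrite sqr_sqrtr; last by rewrite ltW // divr_gt0.
rewrite mulrA ltr_pdivrMr // mulrDr mulr1; have := Mc_ge0; nra.
Qed.
End C.

Local Close Scope classical_set_scope.
Require Import Defs.
Section F.
Variables (R : realType) (k : nat) (m : 'I_k -> nat).

Lemma distT_eq0 (q q' : Tgt R m) : distT q q' = 0 -> q = q'.
Proof.
rewrite /distT => h.
have hS : 0 <= \sum_(i < k) vnorm2 (q.1 i - q'.1 i).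
  by apply: sumr_ge0 => i _; exact: vnorm2_ge0.
have hc := cnorm2_ge0 (q.2 - q'.2).
have e1 : \sum_(i < k) vnorm2 (q.1 i - q'.1 i) = 0 by lra.
have e2 : cnorm2 (q.2 - q'.2) = 0 by lra.
rewrite [q]surjective_pairing [q']surjective_pairing; congr (_, _).
  apply: functional_extensionality_dep => i; apply/eqP; rewrite -subr_eq0; apply/eqP.
  apply: vnorm2_eq0; move/psumr_eq0P: e1 => -> // j _; exact: vnorm2_ge0.
by apply/eqP; rewrite -subr_eq0 -cnorm2_eq0 e2.
Qed.

Lemma lip_small (p p' : Pt R m) e : InDom p -> InDom p' -> 0 < e ->
  distP p p' < e / 2 ^+ k -> distT (proj p) (proj p') < e.
Proof.
move=> h h' e0 d; apply: le_lt_trans (proj_lip h h') _.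
by move: d; rewrite ltr_pdivlMr ?exprn_gt0 // mulrC.
Qed.

Lemma open_back (U : Tgt R m -> Prop) : (0 < k)%N ->
  rel_open (@distP R k m) (@InDom R k m) (fun p => U (proj p)) ->
  rel_open (@distT R k m) (@InSm R k m) U.
Proof.
move=> hk H q hq Uq.
apply: contrapT => Hn.
have Hs n : exists p : Pt R m,
    [/\ InDom p, distT q (proj p) < n.+1%:R^-1 & ~ U (proj p)].
  apply: contrapT => Hc; apply: Hn; exists (n.+1%:R^-1) => // y hy dy.
  apply: contrapT => nUy; have [p hp ep] := proj_surj hk hy; apply: Hc; exists p; by rewrite ep.
have [pn Hpn] := choice Hs.
have hpn n : InDom (pn n) by case: (Hpn n).
have [ps hps cps] := cluster_seq hpn.
have small e : 0 < e -> distT q (proj ps) < e.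
  move=> e0.
  pose N := Num.bound (4 / e).
  have hN : 4 / e < N%:R by apply: archi_boundP; rewrite ltW // divr_gt0.
  have dd : 0 < e / 4 / 2 ^+ k by rewrite !divr_gt0 // exprn_gt0.
  have [n hn dn] := cps _ dd N.
  have t1 : distT (proj (pn n)) (proj ps) < e / 4.
    by apply: lip_small => //; [rewrite divr_gt0|rewrite distP_sym].
  have t2 : distT q (proj (pn n)) < e / 4.
    case: (Hpn n) => _ dq _; apply: lt_trans dq _.
    rewrite -[e / 4]invf_div ltf_pV2 ?posrE ?ltr0n ?divr_gt0 //.
    apply: lt_le_trans hN _; by rewrite ler_nat ltnW // ltnS.
  have := distT_tri q (proj (pn n)) (proj ps); lra.
have eq : proj ps = q.
  apply/esym/distT_eq0/eqP; rewrite eq_le distT_ge0 andbT leNgt; apply/negP => dp.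
  by have := small _ dp; rewrite ltxx.
have Ups : U (proj ps) by rewrite eq.
have [del del0 Hdel] := H ps hps Ups.
have [n _ dn] := cps _ del0 0%N.
by case: (Hpn n) => _ _; apply; apply: Hdel.
Qed.

Lemma open_fwd (U : Tgt R m -> Prop) :
  rel_open (@distT R k m) (@InSm R k m) U ->
  rel_open (@distP R k m) (@InDom R k m) (fun p => U (proj p)).
Proof.
move=> H p hp Up; have [e e0 He] := H _ (part1 hp) Up.
exists (e / 2 ^+ k) => [|y hy dy]; first by rewrite divr_gt0 // exprn_gt0.
by apply: He; [exact: part1 hy|exact: lip_small].
Qed.

Lemma cont : rel_continuous (@distP R k m) (@distT R k m) (@InDom R k m) (@proj R k m).
Proof.
move=> x hx e e0; exists (e / 2 ^+ k) => [|y hy dy]; first by rewrite divr_gt0 // exprn_gt0.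
exact: lip_small.
Qed.
End F.

Require Import Defs.
Local Open Scope ring_scope.

Theorem theorem2 (R : realType) (k : nat) (m : 'I_k -> nat) :
  (2 <= k)%N -> (forall i, 2 <= m i)%N ->
  [/\ forall p : Pt R m, InDom p -> InSm (proj p),
      forall q : Tgt R m, InSm q -> exists2 p : Pt R m, InDom p & proj p = q,
      forall p p' : Pt R m, InDom p -> InDom p' ->
        (proj p = proj p' <-> exists2 r, InTorus r & p' = act r p),
      rel_continuous (@distP R k m) (@distT R k m) (@InDom R k m) (@proj R k m)
    & forall U : Tgt R m -> Prop,
        rel_open (@distT R k m) (@InSm R k m) U <->
        rel_open (@distP R k m) (@InDom R k m) (fun p => U (proj p))].
Proof.
move=> hk hm; have hk0 : (0 < k)%N by apply: leq_trans hk.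
split.
- by move=> p; exact: part1.
- by move=> q; exact: proj_surj hk0.
- by move=> p p' h h'; exact: part3.
- exact: cont.
- by move=> U; split; [exact: open_fwd|exact: open_back].
Qed.
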